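(* For each $0\le k\le K$ define $$v_k^-=\inf\Big(\operatorname*{argmax}_{v\in[0,q]}\Psi_k^{\mathrm{BSAA}}(v)\Big),\qquad v_k^+=\inf\Big(\operatorname*{argmax}_{v\in[q,1]}\Psi_k^{\mathrm{BSAA}}(v)\Big).$$ Then the sequences $(v_k^-)_{k=0}^K$ and $(v_k^+)_{k=0}^K$ are non-increasing in $k$.
   Context: Fix $c_u,c_o>0$ and $q=c_u/(c_u+c_o)\in(0,1)$. Fix $K\ge1$, $\bm n=(n_1,\dots,n_K)\in\mathbb N^K$, $n=\sum_k n_k$, $\sigma_k=\sum_{\ell=1}^k n_\ell$ ($\sigma_0=0$). $B_{r,m}(p)=\sum_{j=r}^m\binom mj p^j(1-p)^{m-j}$ (with $B_{r,m}\equiv1$ if $r<0$). For $v\in[0,1]$, $\Psi_k^{\mathrm{BSAA}}(v)=\big(1-B_{\lceil qn\rceil-\sigma_k,\,n-\sigma_k}(v)\big)(v-q)+(q-v)^+$. *)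

(* Defs.v *)
From HB Require Import structures.
From mathcomp Require Import all_boot all_order all_algebra.
From mathcomp Require Import all_classical all_reals.
Set Implicit Arguments. Unset Strict Implicit. Unset Printing Implicit Defensive.
Import Order.TTheory GRing.Theory Num.Theory.
Local Open Scope ring_scope.
Local Open Scope classical_set_scope.

Definition Btail {R : realType} (r : int) (m : nat) (p : R) : R :=
  if (r < 0)%R then 1
  else \sum_(`|r|%N <= j < m.+1) ('C(m, j))%:R * p ^+ j * (1 - p) ^+ (m - j).

Definition qratio {R : realType} (cu co : R) : R := cu / (cu + co).

(* sigma_k = n_1 + ... + n_k  (sigma_0 = 0); batch sizes ns 1, ..., ns K *)
Definition sigma (ns : nat -> nat) (k : nat) : nat := (\sum_(1 <= l < k.+1) ns l)%N.

Definition PsiBSAA {R : realType} (cu co : R) (K : nat) (ns : nat -> nat) (k : nat) (v : R) : R :=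
  let q := qratio cu co in
  let n := sigma ns K in
  (1 - Btail (Num.ceil (q * n%:R) - (sigma ns k)%:Z) (n - sigma ns k) v) * (v - q)
  + Num.max (q - v) 0.

Definition argmax_on {R : realType} (f : R -> R) (A : set R) : set R :=
  [set v | A v /\ forall w, A w -> f w <= f v].

Definition vminus {R : realType} (cu co : R) K ns k : R :=
  inf (argmax_on (PsiBSAA cu co K ns k) `[0, qratio cu co]).
Definition vplus {R : realType} (cu co : R) K ns k : R :=
  inf (argmax_on (PsiBSAA cu co K ns k) `[qratio cu co, 1]).

(* Main.v *)
Require Import Defs.
From HB Require Import structures.
From mathcomp Require Import all_boot all_order all_algebra.
From mathcomp Require Import all_classical all_reals all_analysis.
From mathcomp Require Import ring lra zify.
Import Order.TTheory GRing.Theory Num.Theory.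
Import numFieldNormedType.Exports.
Local Open Scope ring_scope.

Section Main.
Variable R : realType.
Implicit Types x y v : R.

Definition pmf (m j : nat) (v : R) : R := ('C(m, j))%:R * v ^+ j * (1 - v) ^+ (m - j).
Definition bt (r m : nat) (v : R) : R := \sum_(r <= j < m.+1) pmf m j v.

Lemma pmf_ge0 m j v : 0 <= v <= 1 -> 0 <= pmf m j v.
Proof.
move=> /andP[v0 v1]; rewrite /pmf; apply: mulr_ge0; first apply: mulr_ge0 => //.
  exact: exprn_ge0.
by apply: exprn_ge0; rewrite subr_ge0.
Qed.

Lemma pmf_gt0 m j v : 0 < v < 1 -> (j <= m)%N -> 0 < pmf m j v.
Proof.
move=> /andP[v0 v1] jm; rewrite /pmf; apply: mulr_gt0; first apply: mulr_gt0.
- by rewrite ltr0n bin_gt0.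
- exact: exprn_gt0.
by apply: exprn_gt0; rewrite subr_gt0.
Qed.

Lemma bt_ge0 r m v : 0 <= v <= 1 -> 0 <= bt r m v.
Proof. by move=> h; apply: sumr_ge0 => j _; apply: pmf_ge0. Qed.

Lemma bt_split r m v : (r <= m)%N -> bt r m v = pmf m r v + bt r.+1 m v.
Proof. by move=> rm; rewrite /bt big_ltn. Qed.

Lemma pascal r m v : (r <= m)%N -> bt r.+1 m.+1 v = bt r.+1 m v + v * pmf m r v.
Proof.
move=> rm; move: {2}(m - r)%N (erefl (m - r)%N) => d.
elim: d r rm => [|d IH] r rm hd.
  have -> : r = m by lia.
  rewrite /bt big_nat1 big_geq // add0r /pmf !subnn !expr0 !binn.
  by rewrite exprS; ring.
rewrite /bt big_ltn; last by lia.
rewrite -/(bt r.+2 m.+1 v) IH; [|lia|lia].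
rewrite big_ltn; last by lia.
rewrite -/(bt r.+2 m v).
rewrite /pmf binS subSS.
have -> : (m - r = (m - r.+1).+1)%N by lia.
rewrite !exprS natrD; ring.
Qed.

Lemma bt0 m v : bt 0 m v = 1.
Proof.
elim: m => [|m IH]; first by rewrite /bt big_nat1 /pmf bin0 !expr0 !mulr1.
rewrite /bt big_ltn // -/(bt 1 m.+1 v) pascal //.
move: IH; rewrite (@bt_split 0 m v) // => <-.
rewrite /pmf !bin0 !subn0 !expr0 exprS; ring.
Qed.

Lemma bt_zero0 r m : bt r.+1 m 0 = 0.
Proof.
apply: big1_seq => j /andP[_]; rewrite mem_index_iota => /andP[h _].
by rewrite /pmf expr0n; case: j h => //= j _; rewrite mulr0 mul0r.
Qed.

Definition Qs (r m : nat) (v : R) : R := \sum_(0 <= j < r) pmf m j v.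

Lemma Qs_ge0 r m v : 0 <= v <= 1 -> 0 <= Qs r m v.
Proof. by move=> h; apply: sumr_ge0 => j _; apply: pmf_ge0. Qed.

Lemma one_sub_bt r m v : (r <= m.+1)%N -> 1 - bt r m v = Qs r m v.
Proof.
move=> rm; rewrite -(bt0 m v) /bt (@big_cat_nat _ _ _ r) //=.
by rewrite addrK.
Qed.


Lemma key1 x y r e k : 0 <= x -> x <= y -> y <= 1 ->
  (1-y) * (x^+(r+e.+1) * (1-x)^+k) * (y^+r * (1-y)^+(e.+1+k)) <=
  (1-x) * (y^+(r+e.+1)*(1-y)^+k) * (x^+r*(1-x)^+(e.+1 + k)).
Proof.
move=> x0 xy y1.
have y0 : 0 <= y by lra.
have x1 : 0 <= 1 - x by lra.
have y1' : 0 <= 1 - y by lra.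
set K := x^+r * y^+r * (1-x)^+k * (1-y)^+k.
have K0 : 0 <= K by rewrite /K; do !apply: mulr_ge0; apply: exprn_ge0.
have -> : (1-y) * (x^+(r+e.+1) * (1-x)^+k) * (y^+r * (1-y)^+(e.+1+k)) =
  K * (x^+e.+1 * (1-y)^+e.+1 * (1-y)) by rewrite /K !exprD; ring.
have -> : (1-x) * (y^+(r+e.+1)*(1-y)^+k) * (x^+r*(1-x)^+(e.+1 + k)) =
  K * (y^+e.+1 * (1-x)^+e.+1 * (1-x)) by rewrite /K !exprD; ring.
apply: ler_wpM2l => //.
apply: ler_pM; [|lra| |lra].
- by apply: mulr_ge0; apply: exprn_ge0.
apply: ler_pM; [exact: exprn_ge0|exact: exprn_ge0| |].
- by apply: lerXn2r => //; rewrite nnegrE.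
- by apply: lerXn2r => //; rewrite ?nnegrE //; lra.
Qed.

Lemma key2 x y j d k : 0 <= x -> x <= y -> y <= 1 ->
  (1-x) * (y^+j * (1-y)^+(d.+1+k)) * (x^+(j+d.+1) * (1-x)^+k) <=
  (1-y) * (x^+j * (1-x)^+(d.+1+k)) * (y^+(j+d.+1) * (1-y)^+k).
Proof.
move=> x0 xy y1.
have y0 : 0 <= y by lra.
have x1 : 0 <= 1 - x by lra.
have y1' : 0 <= 1 - y by lra.
set K := x^+j * y^+j * (1-x)^+k * (1-y)^+k * ((1-y)*(1-x)).
have K0 : 0 <= K by rewrite /K; do !apply: mulr_ge0; try apply: exprn_ge0.
have -> : (1-x) * (y^+j * (1-y)^+(d.+1+k)) * (x^+(j+d.+1) * (1-x)^+k) =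
  K * (x^+d.+1 * (1-y)^+d) by rewrite /K !exprD !exprS; ring.
have -> : (1-y) * (x^+j * (1-x)^+(d.+1+k)) * (y^+(j+d.+1) * (1-y)^+k) =
  K * (y^+d.+1 * (1-x)^+d) by rewrite /K !exprD !exprS; ring.
apply: ler_wpM2l => //.
apply: ler_pM; [exact: exprn_ge0|exact: exprn_ge0| |].
- by apply: lerXn2r => //; rewrite nnegrE.
- by apply: lerXn2r => //; rewrite ?nnegrE //; lra.
Qed.

Lemma crossP x y r m : 0 <= x -> x <= y -> y <= 1 ->
  (1-y) * bt r.+1 m x * pmf m r y <= (1-x) * bt r.+1 m y * pmf m r x.
Proof.
move=> x0 xy y1; rewrite /bt !mulr_sumr !mulr_suml; apply: ler_sum_nat => j /andP[hj hm].
have [e ej] : exists e, j = (r + e.+1)%N by exists (j - r.+1)%N; lia.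
have [k mk] : exists k, m = (j + k)%N by exists (m - j)%N; lia.
subst j m; rewrite /pmf.
have -> : (r + e.+1 + k - (r + e.+1) = k)%N by lia.
have -> : (r + e.+1 + k - r = e.+1 + k)%N by lia.
set Cj := ('C(_, r + e.+1))%:R; set Cr := ('C(_, r))%:R.
have C0 : 0 <= Cj * Cr :> R by rewrite /Cj /Cr -natrM ler0n.
have -> : (1 - y) * (Cj * x ^+ (r + e.+1) * (1 - x) ^+ k) * (Cr * y ^+ r * (1 - y) ^+ (e.+1 + k))
  = (Cj * Cr) * ((1-y) * (x^+(r+e.+1) * (1-x)^+k) * (y^+r * (1-y)^+(e.+1+k)))
  by ring.
have -> : (1 - x) * (Cj * y ^+ (r + e.+1) * (1 - y) ^+ k) * (Cr * x ^+ r * (1 - x) ^+ (e.+1 + k))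
  = (Cj * Cr) * ((1-x) * (y^+(r+e.+1)*(1-y)^+k) * (x^+r*(1-x)^+(e.+1 + k)))
  by ring.
by apply: ler_wpM2l => //; apply: key1.
Qed.

Lemma crossQ x y r m : 0 <= x -> x <= y -> y <= 1 -> (r <= m)%N ->
  (1-x) * Qs r m y * pmf m r x <= (1-y) * Qs r m x * pmf m r y.
Proof.
move=> x0 xy y1 rm; rewrite /Qs !mulr_sumr !mulr_suml; apply: ler_sum_nat => j /andP[hj hr].
have [d rd] : exists d, r = (j + d.+1)%N by exists (r - j.+1)%N; lia.
have [k mk] : exists k, m = (r + k)%N by exists (m - r)%N; lia.
subst r m; rewrite /pmf.
have -> : (j + d.+1 + k - (j + d.+1) = k)%N by lia.
have -> : (j + d.+1 + k - j = d.+1 + k)%N by lia.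
set Cj := ('C(_, j))%:R; set Cr := ('C(_, j + d.+1))%:R.
have C0 : 0 <= Cj * Cr :> R by rewrite /Cj /Cr -natrM ler0n.
have -> : (1 - x) * (Cj * y ^+ j * (1 - y) ^+ (d.+1 + k)) * (Cr * x ^+ (j + d.+1) * (1 - x) ^+ k)
  = (Cj * Cr) * ((1-x) * (y^+j * (1-y)^+(d.+1+k)) * (x^+(j+d.+1) * (1-x)^+k))
  by ring.
have -> : (1 - y) * (Cj * x ^+ j * (1 - x) ^+ (d.+1 + k)) * (Cr * y ^+ (j + d.+1) * (1 - y) ^+ k)
  = (Cj * Cr) * ((1-y) * (x^+j * (1-x)^+(d.+1+k)) * (y^+(j+d.+1) * (1-y)^+k))
  by ring.
by apply: ler_wpM2l => //; apply: key2.
Qed.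


Definition Pprop (f g : R -> R) (a b : R) :=
  forall x y, a <= x -> x <= y -> y <= b -> f y <= f x -> g y <= g x.

Lemma stepM q r m : 0 < q < 1 -> (r <= m)%N ->
  Pprop (fun v => bt r.+1 m.+1 v * (q - v)) (fun v => bt r m v * (q - v)) 0 q.
Proof.
move=> /andP[q0 q1] rm x y x0 xy yq /=.
have [<-|nxy] := eqVneq x y; first by move=> _; exact: lexx.
rewrite !pascal // (@bt_split r m x rm) (@bt_split r m y rm).
have hx : 0 <= x <= 1 by apply/andP; split; lra.
have hy : 0 <= y <= 1 by apply/andP; split; lra.
have cr := @crossP x y r m x0 xy (ltW (le_lt_trans yq q1)).
have Px0 := @bt_ge0 r.+1 m x hx; have Py0 := @bt_ge0 r.+1 m y hy.
have bx0 := @pmf_ge0 m r x hx; have by0 := @pmf_ge0 m r y hy.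
move: cr Px0 Py0 bx0 by0.
set Px := bt r.+1 m x; set Py := bt r.+1 m y; set bx := pmf m r x; set by_ := pmf m r y.
move=> cr Px0 Py0 bx0 by0 H.
have [xe|xn] := eqVneq x 0.
  have Px00 : Px = 0 by rewrite /Px xe bt_zero0.
  have ypos : 0 < y by rewrite lt_def; apply/andP; split; [apply/eqP => ye; move/eqP: nxy; apply; rewrite xe ye|lra].
  have bypos : 0 < by_ by apply: pmf_gt0 => //; apply/andP; split; lra.
  have hpos : 0 < Py + y * by_ by apply: ltr_wpDl => //; apply: mulr_gt0.
  rewrite Px00 xe mul0r addr0 subr0 in H.
  have qy : q - y <= 0.
    nra.
  have -> : q - y = 0 by lra.
  by rewrite mulr0 Px00 addr0; apply: mulr_ge0 => //; lra.
have xpos : 0 < x by rewrite lt_def xn; lra.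
have bxpos : 0 < bx by apply: pmf_gt0 => //; apply/andP; split; lra.
have axpos : 0 < Px + x * bx by apply: ltr_wpDl => //; apply: mulr_gt0.
have e : 0 <= (y - x) * bx * by_ by apply: mulr_ge0; [apply: mulr_ge0|]; lra.
have h1 : (by_ + Py) * (Px + x * bx) <= (bx + Px) * (Py + y * by_) by nra.
rewrite -(ler_pM2r axpos).
have h2 : (by_ + Py) * (Px + x * bx) * (q - y) <= (bx + Px) * (Py + y * by_) * (q - y).
  by apply: ler_wpM2r => //; lra.
have h3 : (bx + Px) * ((Py + y * by_) * (q - y)) <= (bx + Px) * ((Px + x * bx) * (q - x)).
  by apply: ler_wpM2l => //; lra.
nra.
Qed.

Lemma stepP q r m : 0 < q < 1 -> (r <= m)%N ->
  Pprop (fun v => (1 - bt r.+1 m.+1 v) * (v - q)) (fun v => (1 - bt r m v) * (v - q)) q 1.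
Proof.
move=> /andP[q0 q1] rm x y qx xy y1 /=.
have [<-|nxy] := eqVneq x y; first by move=> _; exact: lexx.
have E v : 1 - bt r.+1 m.+1 v = Qs r m v + (1 - v) * pmf m r v.
  rewrite pascal //; have := @bt_split r m v rm; have := @one_sub_bt r m v (leqW rm).
  move=> h1 h2; rewrite mulrBl mul1r; lra.
rewrite !E !one_sub_bt ?(leqW rm) //.
have hx : 0 <= x <= 1 by apply/andP; split; lra.
have hy : 0 <= y <= 1 by apply/andP; split; lra.
have cr := @crossQ x y r m (ltW (lt_le_trans q0 qx)) xy y1 rm.
have Qx0 := @Qs_ge0 r m x hx; have Qy0 := @Qs_ge0 r m y hy.
have bx0 := @pmf_ge0 m r x hx; have by0 := @pmf_ge0 m r y hy.
move: cr Qx0 Qy0 bx0 by0.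
set Qx := Qs r m x; set Qy := Qs r m y; set bx := pmf m r x; set by_ := pmf m r y.
move=> cr Qx0 Qy0 bx0 by0 H.
have [xe|xn] := eqVneq x 1.
  by exfalso; move/eqP: nxy; apply; lra.
have xpos : x < 1 by rewrite lt_def eq_sym xn; lra.
have bxpos : 0 < bx by apply: pmf_gt0 => //; apply/andP; split; lra.
have axpos : 0 < Qx + (1 - x) * bx by apply: ltr_wpDl => //; apply: mulr_gt0; lra.
have h1 : Qy * (Qx + (1 - x) * bx) <= Qx * (Qy + (1 - y) * by_) by nra.
rewrite -(ler_pM2r axpos).
have h2 : Qy * (Qx + (1 - x) * bx) * (y - q) <= Qx * (Qy + (1 - y) * by_) * (y - q).
  by apply: ler_wpM2r => //; lra.
have h3 : Qx * ((Qy + (1 - y) * by_) * (y - q)) <= Qx * ((Qx + (1 - x) * bx) * (x - q)).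
  by apply: ler_wpM2l => //; lra.
nra.
Qed.



Lemma cont_sum (s : seq nat) (F : nat -> R -> R) :
  (forall i, continuous (F i : R -> R)) -> continuous (fun v : R => \sum_(i <- s) F i v).
Proof.
move=> hF; elim: s => [|a s IH].
  have -> : (fun v => \sum_(i <- [::]) F i v) = fun=> 0 by apply/funext => v; rewrite big_nil.
  exact: cst_continuous.
have -> : (fun v => \sum_(i <- a :: s) F i v) = (fun v => F a v + \sum_(i <- s) F i v).
  by apply/funext => v; rewrite big_cons.
by move=> x; apply: continuousD; [apply: hF | apply: IH].
Qed.

Lemma cont_pow (f : R -> R) k : continuous f -> continuous (fun v : R => f v ^+ k).
Proof.
move=> hf; elim: k => [|k IH].
  have -> : (fun v => f v ^+ 0) = fun=> 1 by apply/funext => v; rewrite expr0.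
  exact: cst_continuous.
have -> : (fun v => f v ^+ k.+1) = (fun v => f v * f v ^+ k) by apply/funext => v; rewrite exprS.
by move=> x; apply: (@continuousM _ _ f (fun v => f v ^+ k)); [apply: hf | apply: IH].
Qed.

Lemma cont_mul (f g : R -> R) : continuous f -> continuous g -> continuous (fun v : R => f v * g v).
Proof. by move=> hf hg x; apply: (@continuousM _ _ f g); [apply: hf | apply: hg]. Qed.

Lemma cont_add (f g : R -> R) : continuous f -> continuous g -> continuous (fun v : R => f v + g v).
Proof. by move=> hf hg x; apply: (@continuousD _ _ _ f g); [apply: hf | apply: hg]. Qed.

Lemma cont_sub (f g : R -> R) : continuous f -> continuous g -> continuous (fun v : R => f v - g v).
Proof. by move=> hf hg x; apply: (@continuousB _ _ _ f g); [apply: hf | apply: hg]. Qed.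

Lemma cont_lin (a b : R) : continuous (fun v : R => a + b * v).
Proof.
move=> x; apply: continuousD; first exact: cst_continuous.
apply: (@continuousM _ _ (fun=> b) (fun v => v)); [exact: cst_continuous | exact: cvg_id].
Qed.


Lemma cont_Btail (z : int) m : continuous (fun v : R => Btail z m v).
Proof.
rewrite /Btail; case: (z < 0); first exact: cst_continuous.
apply: cont_sum => j.
apply: (@cont_mul (fun v => ('C(m, j))%:R * v ^+ j) (fun v => (1 - v) ^+ (m - j))).
  apply: (@cont_mul (fun=> ('C(m, j))%:R) (fun v => v ^+ j)); first exact: cst_continuous.
  by apply: (@cont_pow (fun v => v)) => y; exact: cvg_id.
apply: (@cont_pow (fun v => 1 - v)).
have -> : (fun v : R => 1 - v) = (fun v => 1 + (-1) * v) by apply/funext => v; ring.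
exact: cont_lin.
Qed.

Lemma cont_Psi cu co K ns k : continuous (PsiBSAA (R:=R) cu co K ns k).
Proof.
rewrite /PsiBSAA /=.
set z := (_ - _)%R; set m := (_ - _)%N; set q := qratio cu co.
apply: (@cont_add (fun v => (1 - Btail z m v) * (v - q)) (fun v => Num.max (q - v) 0)).
  apply: (@cont_mul (fun v => 1 - Btail z m v) (fun v => v - q)).
    apply: (@cont_sub (fun=> 1) (fun v => Btail z m v)); first exact: cst_continuous.
    exact: cont_Btail.
  by apply: (@cont_sub (fun v => v) (fun=> q)); [move=> y; exact: cvg_id | exact: cst_continuous].
have -> : (fun v : R => Num.max (q - v) 0) = (fun v => q - v) \max (fun=> 0).
  by apply/funext => v.
apply: max_fun_continuous; last exact: cst_continuous.
by apply: (@cont_sub (fun=> q) (fun v => v)); [exact: cst_continuous | move=> y; exact: cvg_id].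
Qed.


Lemma cs (f h : R -> R) (a b : R) : a <= b -> continuous f -> continuous h ->
  Pprop f h a b ->
  inf (argmax_on h `[a, b]%classic) <= inf (argmax_on f `[a, b]%classic).
Proof.
move=> ab cf ch P.
have cfw : {within `[a, b], continuous f}%classic by apply: continuous_subspaceT.
have [c cI cmax] := EVT_max ab cfw.
apply: lb_le_inf; first by exists c; split.
move=> x [xI xmax].
have xI' : a <= x <= b by move: xI; rewrite /= in_itv.
case/andP: xI' => ax xb.
have chw : {within `[a, x], continuous h}%classic by apply: continuous_subspaceT.
have [z zI zmax] := EVT_max ax chw.
move: (zI); rewrite in_itv => /andP[az zx].
have hl : has_lbound (argmax_on h `[a, b]%classic).
  by exists a => w [wI _]; move: wI; rewrite /= in_itv => /andP[].
apply: (le_trans _ zx); apply: (ge_inf hl); split.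
  by rewrite /= in_itv az /= (le_trans zx xb).
move=> w wI; move: (wI); rewrite /= in_itv => /andP[aw wb].
have [wx|xw] := leP w x.
  by apply: zmax; rewrite in_itv /=; apply/andP; split.
apply: (le_trans (y := h x)).
  apply: (P x w) => //; first exact: ltW.
  exact: xmax.
by apply: zmax; rewrite in_itv /=; apply/andP; split.
Qed.



Lemma Pprop_trans f g h a b : Pprop f g a b -> Pprop g h a b -> Pprop f h a b.
Proof. by move=> P1 P2 x y ax xy yb H; apply: P2 => //; apply: P1. Qed.

Lemma Pprop_refl f a b : Pprop f f a b.
Proof. by []. Qed.

Lemma Pprop_ext f f' g g' a b : (forall v, a <= v <= b -> f v = f' v) ->
  (forall v, a <= v <= b -> g v = g' v) -> Pprop f' g' a b -> Pprop f g a b.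
Proof.
move=> ef eg P x y ax xy yb.
have hx : a <= x <= b by rewrite ax /= (le_trans xy yb).
have hy : a <= y <= b by rewrite yb andbT (le_trans ax xy).
rewrite !ef // !eg //; exact: P.
Qed.

Lemma A_val (t m : nat) v : Btail ((m%:Z - t%:Z)%R) m v = if (m < t)%N then 1 else bt (m - t) m v.
Proof.
case: ltnP => h.
  by rewrite /Btail subr_lt0 ltz_nat h.
rewrite subzn // /Btail.
Qed.

Definition Phi (q : R) (t m : nat) (v : R) : R :=
  (1 - Btail ((m%:Z - t%:Z)%R) m v) * (v - q) + Num.max (q - v) 0.

Lemma stepPhi q t m : 0 < q < 1 ->
  Pprop (Phi q t m.+1) (Phi q t m) 0 q /\ Pprop (Phi q t m.+1) (Phi q t m) q 1.
Proof.
move=> /andP[q0 q1].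
have hq : 0 < q < 1 by rewrite q0 q1.
case: (ltnP m t) => h.
  have E v : Phi q t m.+1 v = Phi q t m v.
    rewrite /Phi !A_val h.
    case: ltnP => // h2.
    have -> : (m.+1 - t = 0)%N by lia.
    by rewrite bt0.
  have e : Phi q t m.+1 = Phi q t m by apply/funext => v; exact: E.
  by rewrite e; split; apply: Pprop_refl.
have E1 v : Btail ((m.+1%:Z - t%:Z)%R) m.+1 v = bt (m - t).+1 m.+1 v.
  rewrite A_val ifF; last by apply/negbTE; rewrite -leqNgt; lia.
  by have -> : (m.+1 - t = (m - t).+1)%N by lia.
have E2 v : Btail ((m%:Z - t%:Z)%R) m v = bt (m - t) m v.
  by rewrite A_val ifF //; apply/negbTE; rewrite -leqNgt.
have rm : (m - t <= m)%N by lia.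
split.
  apply: (@Pprop_ext _ (fun v => bt (m - t).+1 m.+1 v * (q - v))
                    _ (fun v => bt (m - t) m v * (q - v))); last exact: stepM.
  - move=> v /andP[_ vq]; rewrite /Phi E1 max_l; last by rewrite subr_ge0.
    ring.
  - move=> v /andP[_ vq]; rewrite /Phi E2 max_l; last by rewrite subr_ge0.
    ring.
apply: (@Pprop_ext _ (fun v => (1 - bt (m - t).+1 m.+1 v) * (v - q))
                  _ (fun v => (1 - bt (m - t) m v) * (v - q))); last exact: stepP.
- move=> v /andP[qv _]; rewrite /Phi E1 max_r; last by rewrite subr_le0.
  ring.
- move=> v /andP[qv _]; rewrite /Phi E2 max_r; last by rewrite subr_le0.
  ring.
Qed.

Lemma stepsPhi q t m s : 0 < q < 1 ->
  Pprop (Phi q t (m + s)) (Phi q t m) 0 q /\ Pprop (Phi q t (m + s)) (Phi q t m) q 1.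
Proof.
move=> hq; elim: s => [|s [IH1 IH2]]; first by rewrite addn0; split; apply: Pprop_refl.
have [S1 S2] := @stepPhi q t (m + s) hq.
rewrite addnS; split; [exact: Pprop_trans S1 IH1 | exact: Pprop_trans S2 IH2].
Qed.

Lemma sigmaS ns k : sigma ns k.+1 = (sigma ns k + ns k.+1)%N.
Proof. by rewrite /sigma big_nat_recr. Qed.

Lemma sigma_mono ns k K : (k <= K)%N -> (sigma ns k <= sigma ns K)%N.
Proof.
move=> kK; rewrite /sigma (@big_cat_nat _ _ _ k.+1 1 K.+1) //=; last by lia.
Qed.

Lemma main_ineq (cu co : R) (K : nat) (ns : nat -> nat) k :
  0 < cu -> 0 < co -> (k < K)%N ->
  Pprop (PsiBSAA cu co K ns k) (PsiBSAA cu co K ns k.+1) 0 (qratio cu co) /\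
  Pprop (PsiBSAA cu co K ns k) (PsiBSAA cu co K ns k.+1) (qratio cu co) 1.
Proof.
move=> cu0 co0 kK.
set q := qratio cu co.
have q0 : 0 < q by rewrite /q /qratio divr_gt0 // addr_gt0.
have q1 : q < 1 by rewrite /q /qratio ltr_pdivrMr ?addr_gt0 // mul1r ltrDl.
have hq : 0 < q < 1 by rewrite q0 q1.
set n := sigma ns K.
set c := Num.ceil (q * n%:R).
have c0 : (0 <= c)%R by rewrite /c ceil_ge0; apply: (lt_le_trans (y := 0)); [lra|apply: mulr_ge0; [lra|exact: ler0n]].
have cn : (c <= n%:Z)%R.
  rewrite /c ceil_le_int; apply: (@le_trans _ _ (1 * n%:R)); last by rewrite mul1r.
  by apply: ler_wpM2r; [exact: ler0n|lra].
set cN := `|c|%N.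
have ecN : c = cN%:Z by rewrite /cN gez0_abs.
have cNn : (cN <= n)%N by move: cn; rewrite ecN lez_nat.
set t := (n - cN)%N.
have PsiE j : (sigma ns j <= n)%N -> PsiBSAA cu co K ns j = Phi q t (n - sigma ns j).
  move=> hj; apply/funext => v; rewrite /PsiBSAA /Phi /= -/q -/n -/c.
  congr (((1 - Btail _ _ v) * _) + _).
  rewrite ecN /t; lia.
have h1 : (sigma ns k.+1 <= n)%N by apply: sigma_mono.
have h0 : (sigma ns k <= n)%N by apply: sigma_mono; lia.
rewrite (PsiE k h0) (PsiE k.+1 h1).
have -> : (n - sigma ns k = (n - sigma ns k.+1) + ns k.+1)%N by move: h1; rewrite sigmaS; lia.
exact: stepsPhi.
Qed.

End Main.

Theorem lemma4 (R : realType) (cu co : R) (K : nat) (ns : nat -> nat) :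
  0 < cu -> 0 < co -> (1 <= K)%N ->
  (forall k, (k < K)%N -> vminus cu co K ns k.+1 <= vminus cu co K ns k) /\
  (forall k, (k < K)%N -> vplus cu co K ns k.+1 <= vplus cu co K ns k).
Proof.
move=> cu0 co0 _.
have q0 : 0 < qratio cu co by rewrite /qratio divr_gt0 // addr_gt0.
have q1 : qratio cu co < 1 by rewrite /qratio ltr_pdivrMr ?addr_gt0 // mul1r ltrDl.
split=> k kK; have [P1 P2] := @main_ineq R cu co K ns k cu0 co0 kK.
  by apply: cs => //; [exact: ltW | exact: cont_Psi | exact: cont_Psi].
by apply: cs => //; [exact: ltW | exact: cont_Psi | exact: cont_Psi].
Qed.
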